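(* Let $k\in\mathbb{N}$. For every $\mathbf{f}=(f_1,f_2)\in (C^\infty[-1,1])^2$, \[ \operatorname{Re}\langle\tilde{\mathbf{L}}_\square\mathbf{f},\mathbf{f}\rangle_k\le-\frac12\|\mathbf{f}\|_k^2, \] where $\tilde{\mathbf{L}}_\square\mathbf{f}=\big(f_2-yf_1'-f_1(-1),\ -f_2-yf_2'+f_1''\big)$.
   Context: Sesquilinear forms on pairs of functions on $[-1,1]$: $\langle\mathbf{f},\mathbf{g}\rangle_0:=f_1(-1)\overline{g_1(-1)}+\langle f_1,g_1\rangle_{\dot H^1(-1,1)}+\langle f_2,g_2\rangle_{L^2(-1,1)}$ and $\langle\mathbf{f},\mathbf{g}\rangle_k:=\langle\mathbf{f},\mathbf{g}\rangle_0+\langle f_1,g_1\rangle_{\dot H^{k+1}(-1,1)}+\langle f_2,g_2\rangle_{\dot H^k(-1,1)}$, with $\|\mathbf{f}\|_k^2=\langle\mathbf{f},\mathbf{f}\rangle_k$. Here $f_1(-1)$ in the first component of $\tilde{\mathbf{L}}_\square\mathbf{f}$ denotes the constant function. *)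

(* Defs.v *)
From Stdlib Require Import Reals.
From Coquelicot Require Import Coquelicot.
Open Scope R_scope.

(* Complex-valued functions of a real variable (only their values on [-1,1] matter). *)
Definition cfun := R -> C.

Definition cDn (n : nat) (f : cfun) : cfun :=
  fun x => (Derive_n (fun t => fst (f t)) n x, Derive_n (fun t => snd (f t)) n x).

Definition csmooth (f : cfun) : Prop :=
  forall (n : nat) (x : R),
    ex_derive_n (fun t => fst (f t)) n x /\ ex_derive_n (fun t => snd (f t)) n x.

Definition L2ip (f g : cfun) : C :=
  @RInt C_R_CompleteNormedModule (fun x => Cmult (f x) (Cconj (g x))) (-1) 1.

Definition Hdotip (m : nat) (f g : cfun) : C := L2ip (cDn m f) (cDn m g).

Definition cfun2 := (cfun * cfun)%type.

Definition ip0 (f g : cfun2) : C :=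
  Cplus (Cplus (Cmult (fst f (-1)) (Cconj (fst g (-1))))
               (Hdotip 1 (fst f) (fst g)))
        (L2ip (snd f) (snd g)).

Definition ipk (k : nat) (f g : cfun2) : C :=
  Cplus (Cplus (ip0 f g) (Hdotip (S k) (fst f) (fst g))) (Hdotip k (snd f) (snd g)).

(* ||f||_k^2 = <f,f>_k (a real number; we take its real part). *)
Definition normk2 (k : nat) (f : cfun2) : R := fst (ipk k f f).

Definition Lsq (f : cfun2) : cfun2 :=
  (fun y => Cminus (Cminus (snd f y) (Cmult (RtoC y) (cDn 1 (fst f) y))) (fst f (-1)),
   fun y => Cplus (Cminus (Copp (snd f y)) (Cmult (RtoC y) (cDn 1 (snd f) y)))
                  (cDn 2 (fst f) y)).

(* Main.v *)
Require Import Defs.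
From Stdlib Require Import Reals Lia Lra Psatz.
From Coquelicot Require Import Coquelicot.
Open Scope R_scope.

Definition rsm (h : R -> R) := forall n x, ex_derive_n h n x.

Lemma rsm_ex (h : R -> R) n x : rsm h -> ex_derive (Derive_n h n) x.
Proof. intros H; exact (H (S n) x). Qed.

Lemma loc_all (h : R -> R) n x : rsm h ->
  locally x (fun y : R_UniformSpace => forall k, (k <= n)%nat -> ex_derive_n h k y).
Proof. intros H. apply filter_forall. intros y k _. apply H. Qed.

Lemma rsm_plus f g : rsm f -> rsm g -> rsm (fun t => f t + g t).
Proof. intros Hf Hg n x. apply ex_derive_n_plus; apply loc_all; auto. Qed.
Lemma rsm_minus f g : rsm f -> rsm g -> rsm (fun t => f t - g t).
Proof. intros Hf Hg n x. apply ex_derive_n_minus; apply loc_all; auto. Qed.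
Lemma rsm_opp f : rsm f -> rsm (fun t => - f t).
Proof. intros Hf n x. apply ex_derive_n_opp; auto. Qed.
Lemma rsm_const c : rsm (fun _ => c).
Proof. intros n x. apply ex_derive_n_const. Qed.
Lemma rsm_Dn h j : rsm h -> rsm (Derive_n h j).
Proof. intros H n x. destruct n as [|n]. exact I. simpl.
  apply ex_derive_ext with (Derive_n h (n + j)).
  - intros t. symmetry. apply Derive_n_comp.
  - apply rsm_ex; auto. Qed.

Lemma Dn_xD1 h : rsm h -> forall n x,
  Derive_n (fun t => t * Derive_n h 1 t) n x = x * Derive_n h (S n) x + INR n * Derive_n h n x.
Proof.
  intros H n. induction n as [|n IH]; intros x.
  - simpl. ring.
  - change (Derive (Derive_n (fun t => t * Derive_n h 1 t) n) x = x * Derive_n h (S (S n)) x + INR (S n) * Derive_n h (S n) x).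
    rewrite (Derive_ext _ _ x IH).
    apply is_derive_unique.
    pose proof (Derive_correct _ _ (rsm_ex h (S n) x H)) as H1.
    pose proof (Derive_correct _ _ (rsm_ex h n x H)) as H2.
    simpl in H1, H2.
    assert (E : is_derive (fun t => t * Derive_n h (S n) t + INR n * Derive_n h n t) x
       (1 * Derive_n h (S n) x + x * Derive (Derive_n h (S n)) x + INR n * Derive (Derive_n h n) x)).
    { auto_derive.
      - split; [ exact (rsm_ex h (S n) x H) | split; [exact (rsm_ex h n x H) | exact I]].
      - assert (Ha: Derive (fun x0 => Derive (Derive_n h n) x0) x = Derive (Derive_n h (S n)) x) by reflexivity.
        assert (Hb : Derive (fun x0 => Derive_n h n x0) x = Derive (Derive_n h n) x) by reflexivity.
        assert (Hc: Derive_n h (S n) x = Derive (Derive_n h n) x) by reflexivity.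
        rewrite Ha, Hb, Hc. ring. }
    replace (x * Derive_n h (S (S n)) x + INR (S n) * Derive_n h (S n) x) with
       (1 * Derive_n h (S n) x + x * Derive (Derive_n h (S n)) x + INR n * Derive (Derive_n h n) x).
    exact E.
    rewrite S_INR. simpl. ring.
Qed.

Lemma rsm_xD1 h : rsm h -> rsm (fun t => t * Derive_n h 1 t).
Proof.
  intros H n x. destruct n as [|n]. exact I. simpl.
  apply ex_derive_ext with (fun t => t * Derive_n h (S n) t + INR n * Derive_n h n t).
  - intros t. symmetry. apply Dn_xD1; auto.
  - auto_derive. split; [ exact (rsm_ex h (S n) x H) | split; [exact (rsm_ex h n x H) | exact I]].
Qed.

Lemma Dg1 a c : rsm a -> rsm c -> forall m x,
  Derive_n (fun t => c t - t * Derive_n a 1 t - a (-1)) (S m) x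
  = Derive_n c (S m) x - (x * Derive_n a (S (S m)) x + INR (S m) * Derive_n a (S m) x).
Proof.
  intros Ha Hc m x.
  rewrite Derive_n_minus.
  2: apply loc_all, rsm_minus; [auto | apply rsm_xD1; auto].
  2: apply loc_all, rsm_const.
  rewrite Derive_n_const, Derive_n_minus.
  2: apply loc_all; auto.
  2: apply loc_all, rsm_xD1; auto.
  rewrite Dn_xD1; auto. ring.
Qed.

Lemma Dg2 a c : rsm a -> rsm c -> forall m x,
  Derive_n (fun t => - c t - t * Derive_n c 1 t + Derive_n a 2 t) m x
  = - Derive_n c m x - (x * Derive_n c (S m) x + INR m * Derive_n c m x) + Derive_n a (S (S m)) x.
Proof.
  intros Ha Hc m x.
  rewrite Derive_n_plus.
  2: apply loc_all, rsm_minus; [apply rsm_opp; auto | apply rsm_xD1; auto].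
  2: apply loc_all, rsm_Dn; auto.
  rewrite Derive_n_minus.
  2: apply loc_all, rsm_opp; auto.
  2: apply loc_all, rsm_xD1; auto.
  rewrite Derive_n_opp, Dn_xD1, Derive_n_comp by auto.
  replace (m + 2)%nat with (S (S m)) by lia. ring.
Qed.

Lemma J_id (K K1 : R) (P Q dP dQ : R -> R) :
  K1 = K + 1 ->
  (forall x, is_derive P x (dP x)) -> (forall x, is_derive Q x (dQ x)) ->
  (forall x, ex_derive dP x) -> (forall x, ex_derive dQ x) ->
  RInt (fun t => (dQ t - (t * dP t + K1 * P t)) * P t) (-1) 1
  + RInt (fun t => (- Q t - (t * dQ t + K * Q t) + dP t) * Q t) (-1) 1
  = -(K + 1/2) * RInt (fun t => P t * P t + Q t * Q t) (-1) 1
    + (P 1 * Q 1 - (P 1 * P 1 + Q 1 * Q 1)/2)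
    - (P (-1) * Q (-1) + (P (-1) * P (-1) + Q (-1) * Q (-1))/2).
Proof.
  intros HK HP HQ HdP HdQ.
  assert (eP : forall x, ex_derive P x) by (intros x; eexists; apply HP).
  assert (eQ : forall x, ex_derive Q x) by (intros x; eexists; apply HQ).
  assert (exA : ex_RInt (fun t => (dQ t - (t * dP t + K1 * P t)) * P t) (-1) 1).
  { apply (@ex_RInt_continuous R_CompleteNormedModule). intros z _. apply (@ex_derive_continuous R_AbsRing R_NormedModule). auto_derive. repeat split; auto. }
  assert (exB : ex_RInt (fun t => (- Q t - (t * dQ t + K * Q t) + dP t) * Q t) (-1) 1).
  { apply (@ex_RInt_continuous R_CompleteNormedModule). intros z _. apply (@ex_derive_continuous R_AbsRing R_NormedModule). auto_derive. repeat split; auto. }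
  assert (exI : ex_RInt (fun t => P t * P t + Q t * Q t) (-1) 1).
  { apply (@ex_RInt_continuous R_CompleteNormedModule). intros z _. apply (@ex_derive_continuous R_AbsRing R_NormedModule). auto_derive. repeat split; auto. }
  pose proof (RInt_correct _ _ _ exA) as HA.
  pose proof (RInt_correct _ _ _ exB) as HB.
  pose proof (RInt_correct _ _ _ exI) as HI.
  set (F := fun t => P t * Q t - t * (P t * P t + Q t * Q t) / 2).
  set (dF := fun t => dP t * Q t + P t * dQ t - (P t * P t + Q t * Q t) / 2 - t * (P t * dP t + Q t * dQ t)).
  assert (HF : is_RInt dF (-1) 1 (minus (F 1) (F (-1)))).
  { apply (@is_RInt_derive R_CompleteNormedModule).
    - intros x _. unfold F, dF.
      auto_derive. repeat split; auto.
      replace (Derive (fun y => P y) x) with (dP x) by (symmetry; apply is_derive_unique; apply HP).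
      replace (Derive (fun y => Q y) x) with (dQ x) by (symmetry; apply is_derive_unique; apply HQ).
      field.
    - intros x _. apply (@ex_derive_continuous R_AbsRing R_NormedModule). unfold dF. auto_derive. repeat split; auto. }
  pose proof (is_RInt_plus _ _ _ _ _ _ HA HB) as HAB.
  pose proof (is_RInt_plus _ _ _ _ _ _ (is_RInt_scal _ _ _ (-(K + 1/2)) _ HI) HF) as HIF.
  assert (HIF' : is_RInt (fun t => plus ((dQ t - (t * dP t + K1 * P t)) * P t) ((- Q t - (t * dQ t + K * Q t) + dP t) * Q t)) (-1) 1
     (plus (scal (-(K + 1/2)) (RInt (fun t => P t * P t + Q t * Q t) (-1) 1)) (minus (F 1) (F (-1))))).
  { eapply is_RInt_ext; [ | exact HIF]. intros x _. unfold dF, plus, scal; simpl. unfold mult; simpl. subst K1. field. }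
  assert (U2 : plus (RInt (fun t => (dQ t - (t * dP t + K1 * P t)) * P t) (-1) 1)
     (RInt (fun t => (- Q t - (t * dQ t + K * Q t) + dP t) * Q t) (-1) 1) =
     plus (scal (-(K + 1/2)) (RInt (fun t => P t * P t + Q t * Q t) (-1) 1)) (minus (F 1) (F (-1)))).
  { transitivity (RInt (fun t => plus ((dQ t - (t * dP t + K1 * P t)) * P t) ((- Q t - (t * dQ t + K * Q t) + dP t) * Q t)) (-1) 1).
    symmetry; exact (is_RInt_unique _ _ _ _ HAB). exact (is_RInt_unique _ _ _ _ HIF'). }
  unfold plus, scal, minus, opp, F in U2; simpl in U2. unfold mult in U2; simpl in U2.
  rewrite U2. unfold plus; simpl. field.
Qed.

Lemma RInt_plusR (f g : R -> R) a b : ex_RInt f a b -> ex_RInt g a b ->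
  RInt (fun x => f x + g x) a b = RInt f a b + RInt g a b.
Proof. intros; exact (RInt_plus f g a b H H0). Qed.

Lemma exR (f : R -> R) a b : (forall x, ex_derive f x) -> ex_RInt f a b.
Proof. intros H. apply (@ex_RInt_continuous R_CompleteNormedModule). intros z _.
  apply (@ex_derive_continuous R_AbsRing R_NormedModule). auto. Qed.

Lemma isD h n x : rsm h -> is_derive (Derive_n h n) x (Derive_n h (S n) x).
Proof. intros H. exact (Derive_correct _ _ (rsm_ex h n x H)). Qed.

Lemma sq_int_split (P Q : R -> R) : (forall x, ex_derive P x) -> (forall x, ex_derive Q x) ->
  RInt (fun t => P t * P t + Q t * Q t) (-1) 1 = RInt (fun t => P t * P t) (-1) 1 + RInt (fun t => Q t * Q t) (-1) 1
  /\ 0 <= RInt (fun t => P t * P t + Q t * Q t) (-1) 1.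
Proof. intros HP HQ. split.
  - apply RInt_plusR; apply exR; intros; auto_derive; auto.
  - apply RInt_ge_0. lra. apply exR; intros; auto_derive; repeat split; auto.
    intros; nra.
Qed.

Lemma real_core k a c : rsm a -> rsm c ->
  (c (-1) - (-1) * Derive_n a 1 (-1) - a (-1)) * a (-1)
  + RInt (fun x => Derive_n (fun t => c t - t * Derive_n a 1 t - a (-1)) 1 x * Derive_n a 1 x) (-1) 1
  + RInt (fun x => (- c x - x * Derive_n c 1 x + Derive_n a 2 x) * c x) (-1) 1
  + RInt (fun x => Derive_n (fun t => c t - t * Derive_n a 1 t - a (-1)) (S k) x * Derive_n a (S k) x) (-1) 1
  + RInt (fun x => Derive_n (fun t => - c t - t * Derive_n c 1 t + Derive_n a 2 t) k x * Derive_n c k x) (-1) 1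
  <= -(1/2) * (a (-1) * a (-1) + RInt (fun x => Derive_n a 1 x * Derive_n a 1 x) (-1) 1
       + RInt (fun x => c x * c x) (-1) 1
       + RInt (fun x => Derive_n a (S k) x * Derive_n a (S k) x) (-1) 1
       + RInt (fun x => Derive_n c k x * Derive_n c k x) (-1) 1).
Proof.
  intros Ha Hc.
  pose proof (J_id (INR 0) (INR 1) (Derive_n a 1) (Derive_n c 0) (Derive_n a 2) (Derive_n c 1)) as J0.
  pose proof (J_id (INR k) (INR (S k)) (Derive_n a (S k)) (Derive_n c k) (Derive_n a (S (S k))) (Derive_n c (S k))) as Jk.
  specialize (J0 ltac:(simpl; ring) (fun x => isD a 1 x Ha) (fun x => isD c 0 x Hc)
     (fun x => rsm_ex a 2 x Ha) (fun x => rsm_ex c 1 x Hc)).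
  specialize (Jk ltac:(rewrite S_INR; ring) (fun x => isD a (S k) x Ha) (fun x => isD c k x Hc)
     (fun x => rsm_ex a (S (S k)) x Ha) (fun x => rsm_ex c (S k) x Hc)).
  rewrite (RInt_ext (fun x => Derive_n (fun t => c t - t * Derive_n a 1 t - a (-1)) 1 x * Derive_n a 1 x)
     (fun t => (Derive_n c 1 t - (t * Derive_n a 2 t + INR 1 * Derive_n a 1 t)) * Derive_n a 1 t)).
  2: { intros x _. rewrite (Dg1 a c Ha Hc 0). reflexivity. }
  rewrite (RInt_ext (fun x => (- c x - x * Derive_n c 1 x + Derive_n a 2 x) * c x)
     (fun t => (- Derive_n c 0 t - (t * Derive_n c 1 t + INR 0 * Derive_n c 0 t) + Derive_n a 2 t) * Derive_n c 0 t)).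
  2: { intros x _. assert (Hc0: Derive_n c 0 x = c x) by reflexivity. rewrite Hc0. replace (INR 0) with 0 by reflexivity. match goal with |- ?A = ?B => change (@eq R A B) end. ring. }
  rewrite (RInt_ext (fun x => Derive_n (fun t => c t - t * Derive_n a 1 t - a (-1)) (S k) x * Derive_n a (S k) x)
     (fun t => (Derive_n c (S k) t - (t * Derive_n a (S (S k)) t + INR (S k) * Derive_n a (S k) t)) * Derive_n a (S k) t)).
  2: { intros x _. rewrite (Dg1 a c Ha Hc k). reflexivity. }
  rewrite (RInt_ext (fun x => Derive_n (fun t => - c t - t * Derive_n c 1 t + Derive_n a 2 t) k x * Derive_n c k x)
     (fun t => (- Derive_n c k t - (t * Derive_n c (S k) t + INR k * Derive_n c k t) + Derive_n a (S (S k)) t) * Derive_n c k t)).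
  2: { intros x _. rewrite (Dg2 a c Ha Hc k). reflexivity. }
  destruct (sq_int_split (Derive_n a 1) (Derive_n c 0) (fun x => rsm_ex a 1 x Ha) (fun x => rsm_ex c 0 x Hc)) as [S0 P0].
  destruct (sq_int_split (Derive_n a (S k)) (Derive_n c k) (fun x => rsm_ex a (S k) x Ha) (fun x => rsm_ex c k x Hc)) as [Sk Pk].
  pose proof (pos_INR k) as Hk.
  change (Derive_n c 0) with c in J0.
  change (Derive_n c 0) with c in S0.
  change (Derive_n c 0) with c in P0.
  set (Ik := RInt (fun t => Derive_n a (S k) t * Derive_n a (S k) t + Derive_n c k t * Derive_n c k t) (-1) 1) in *.
  change (Derive_n c 0) with c.
  replace (INR 0) with 0 in J0 |- * by reflexivity.
  rewrite S0 in J0. rewrite Sk in Jk.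
  assert (HkI : 0 <= INR k * Ik) by (apply Rmult_le_pos; auto).
  rewrite Sk in HkI, Pk. rewrite S0 in P0. clearbody Ik. revert J0 Jk HkI P0 Pk.
  generalize (RInt (fun t => Derive_n a 1 t * Derive_n a 1 t) (-1) 1).
  generalize (RInt (fun t => c t * c t) (-1) 1).
  generalize (RInt (fun t => Derive_n a (S k) t * Derive_n a (S k) t) (-1) 1).
  generalize (RInt (fun t => Derive_n c k t * Derive_n c k t) (-1) 1).
  intros r1 r2 r3 r4 J0 Jk HkI P0 Pk.
  revert J0 Jk. 
  generalize (RInt (fun t => (Derive_n c 1 t - (t * Derive_n a 2 t + INR 1 * Derive_n a 1 t)) * Derive_n a 1 t) (-1) 1).
  generalize (RInt (fun t => (- c t - (t * Derive_n c 1 t + 0 * c t) + Derive_n a 2 t) * c t) (-1) 1).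
  generalize (RInt (fun t => (Derive_n c (S k) t - (t * Derive_n a (S (S k)) t + INR (S k) * Derive_n a (S k) t)) * Derive_n a (S k) t) (-1) 1).
  generalize (RInt (fun t => (- Derive_n c k t - (t * Derive_n c (S k) t + INR k * Derive_n c k t) + Derive_n a (S (S k)) t) * Derive_n c k t) (-1) 1).
  intros q1 q2 q3 q4 J0 Jk.
  pose proof (Rle_0_sqr (a (-1) - (Derive_n a 1 (-1) + c (-1)))).
  pose proof (Rle_0_sqr (Derive_n a 1 1 - c 1)).
  pose proof (Rle_0_sqr (Derive_n a 1 (-1) + c (-1))).
  pose proof (Rle_0_sqr (Derive_n a (S k) 1 - Derive_n c k 1)).
  pose proof (Rle_0_sqr (Derive_n a (S k) (-1) + Derive_n c k (-1))).
  unfold Rsqr in *. nra.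
Qed.

Lemma RInt_C_fst (h : R -> C) a b :
  ex_RInt (fun t => fst (h t)) a b -> ex_RInt (fun t => snd (h t)) a b ->
  fst (@RInt C_R_CompleteNormedModule h a b) = RInt (fun t => fst (h t)) a b.
Proof.
  intros [l1 H1] [l2 H2].
  assert (H : @is_RInt C_R_NormedModule h a b (l1, l2)).
  { exact (@is_RInt_fct_extend_pair R_NormedModule R_NormedModule h a b l1 l2 H1 H2). }
  rewrite (@is_RInt_unique C_R_CompleteNormedModule _ _ _ _ H). simpl. symmetry. now apply is_RInt_unique.
Qed.

Lemma Re_L2ip (F G : cfun) :
  (forall x, ex_derive (fun t => fst (F t)) x) -> (forall x, ex_derive (fun t => snd (F t)) x) ->
  (forall x, ex_derive (fun t => fst (G t)) x) -> (forall x, ex_derive (fun t => snd (G t)) x) ->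
  fst (L2ip F G) = RInt (fun x => fst (F x) * fst (G x)) (-1) 1 + RInt (fun x => snd (F x) * snd (G x)) (-1) 1.
Proof.
  intros H1 H2 H3 H4. unfold L2ip.
  rewrite RInt_C_fst.
  - rewrite <- RInt_plusR.
    + apply RInt_ext. intros x _. simpl. ring.
    + apply exR. intros x. apply (ex_derive_mult (fun t => fst (F t)) (fun t => fst (G t))); auto.
    + apply exR. intros x. apply (ex_derive_mult (fun t => snd (F t)) (fun t => snd (G t))); auto.
  - apply exR. intros x. simpl.
    apply (ex_derive_minus (fun t => fst (F t) * fst (G t)) (fun t => snd (F t) * - snd (G t))).
    apply (ex_derive_mult (fun t => fst (F t)) (fun t => fst (G t))); auto.
    apply (ex_derive_mult (fun t => snd (F t)) (fun t => - snd (G t))); auto.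
    apply (ex_derive_opp (fun t => snd (G t))); auto.
  - apply exR. intros x. simpl.
    apply (ex_derive_plus (fun t => fst (F t) * - snd (G t)) (fun t => snd (F t) * fst (G t))).
    apply (ex_derive_mult (fun t => fst (F t)) (fun t => - snd (G t))); auto.
    apply (ex_derive_opp (fun t => snd (G t))); auto.
    apply (ex_derive_mult (fun t => snd (F t)) (fun t => fst (G t))); auto.
Qed.

Lemma side (p : C -> R) (hp : forall m F x, p (cDn m F x) = Derive_n (fun t => p (F t)) m x)
  (u v : cfun) (k : nat) :
  rsm (fun t => p (u t)) -> rsm (fun t => p (v t)) ->
  (forall t, p (fst (Lsq (u,v)) t) = p (v t) - t * Derive_n (fun s => p (u s)) 1 t - p (u (-1))) ->
  (forall t, p (snd (Lsq (u,v)) t) = - p (v t) - t * Derive_n (fun s => p (v s)) 1 t + Derive_n (fun s => p (u s)) 2 t) ->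
  p (fst (Lsq (u,v)) (-1)) * p (u (-1))
  + RInt (fun x => p (cDn 1 (fst (Lsq (u,v))) x) * p (cDn 1 u x)) (-1) 1
  + RInt (fun x => p (snd (Lsq (u,v)) x) * p (v x)) (-1) 1
  + RInt (fun x => p (cDn (S k) (fst (Lsq (u,v))) x) * p (cDn (S k) u x)) (-1) 1
  + RInt (fun x => p (cDn k (snd (Lsq (u,v))) x) * p (cDn k v x)) (-1) 1
  <= -(1/2) * (p (u (-1)) * p (u (-1))
     + RInt (fun x => p (cDn 1 u x) * p (cDn 1 u x)) (-1) 1
     + RInt (fun x => p (v x) * p (v x)) (-1) 1
     + RInt (fun x => p (cDn (S k) u x) * p (cDn (S k) u x)) (-1) 1
     + RInt (fun x => p (cDn k v x) * p (cDn k v x)) (-1) 1).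
Proof.
  intros Ha Hc H1 H2.
  set (a := fun t => p (u t)) in *.
  set (c := fun t => p (v t)) in *.
  assert (E1 : forall m x, p (cDn m (fst (Lsq (u,v))) x) = Derive_n (fun t => c t - t * Derive_n a 1 t - a (-1)) m x).
  { intros m x. rewrite hp. apply Derive_n_ext. intros t. apply H1. }
  assert (E2 : forall m x, p (cDn m (snd (Lsq (u,v))) x) = Derive_n (fun t => - c t - t * Derive_n c 1 t + Derive_n a 2 t) m x).
  { intros m x. rewrite hp. apply Derive_n_ext. intros t. apply H2. }
  assert (Eu : forall m x, p (cDn m u x) = Derive_n a m x) by (intros; apply hp).
  assert (Ev : forall m x, p (cDn m v x) = Derive_n c m x) by (intros; apply hp).
  rewrite H1.
  rewrite (RInt_ext (fun x => p (cDn 1 (fst (Lsq (u,v))) x) * p (cDn 1 u x))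
     (fun x => Derive_n (fun t => c t - t * Derive_n a 1 t - a (-1)) 1 x * Derive_n a 1 x))
     by (intros x _; rewrite E1, Eu; reflexivity).
  rewrite (RInt_ext (fun x => p (snd (Lsq (u,v)) x) * p (v x))
     (fun x => (- c x - x * Derive_n c 1 x + Derive_n a 2 x) * c x))
     by (intros x _; rewrite H2; reflexivity).
  rewrite (RInt_ext (fun x => p (cDn (S k) (fst (Lsq (u,v))) x) * p (cDn (S k) u x))
     (fun x => Derive_n (fun t => c t - t * Derive_n a 1 t - a (-1)) (S k) x * Derive_n a (S k) x))
     by (intros x _; rewrite E1, Eu; reflexivity).
  rewrite (RInt_ext (fun x => p (cDn k (snd (Lsq (u,v))) x) * p (cDn k v x))
     (fun x => Derive_n (fun t => - c t - t * Derive_n c 1 t + Derive_n a 2 t) k x * Derive_n c k x))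
     by (intros x _; rewrite E2, Ev; reflexivity).
  rewrite (RInt_ext (fun x => p (cDn 1 u x) * p (cDn 1 u x)) (fun x => Derive_n a 1 x * Derive_n a 1 x))
     by (intros x _; rewrite Eu; reflexivity).
  rewrite (RInt_ext (fun x => p (cDn (S k) u x) * p (cDn (S k) u x)) (fun x => Derive_n a (S k) x * Derive_n a (S k) x))
     by (intros x _; rewrite Eu; reflexivity).
  rewrite (RInt_ext (fun x => p (cDn k v x) * p (cDn k v x)) (fun x => Derive_n c k x * Derive_n c k x))
     by (intros x _; rewrite Ev; reflexivity).
  exact (real_core k a c Ha Hc).
Qed.

Lemma ex_c1 (F : cfun) m : rsm (fun t => fst (F t)) -> forall x, ex_derive (fun t => fst (cDn m F t)) x.
Proof. intros H x. exact (rsm_ex _ m x H). Qed.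
Lemma ex_c2 (F : cfun) m : rsm (fun t => snd (F t)) -> forall x, ex_derive (fun t => snd (cDn m F t)) x.
Proof. intros H x. exact (rsm_ex _ m x H). Qed.
Lemma ex_p (F : R -> R) : rsm F -> forall x, ex_derive F x.
Proof. intros H x. exact (rsm_ex _ 0 x H). Qed.

Theorem lemma5p2 (k : nat) (f : cfun2) :
  csmooth (fst f) -> csmooth (snd f) ->
  Re (ipk k (Lsq f) f) <= - (1 / 2) * normk2 k f.
Proof.
  destruct f as [u v]. intros Hu Hv. cbn [fst snd] in Hu, Hv.
  assert (Hu1 : rsm (fun t => fst (u t))) by (intros n x; apply Hu).
  assert (Hu2 : rsm (fun t => snd (u t))) by (intros n x; apply Hu).
  assert (Hv1 : rsm (fun t => fst (v t))) by (intros n x; apply Hv).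
  assert (Hv2 : rsm (fun t => snd (v t))) by (intros n x; apply Hv).
  assert (P11 : forall t, fst (fst (Lsq (u,v)) t) = fst (v t) - t * Derive_n (fun s => fst (u s)) 1 t - fst (u (-1))).
  { intros t. unfold Lsq, cDn. simpl. ring. }
  assert (P12 : forall t, snd (fst (Lsq (u,v)) t) = snd (v t) - t * Derive_n (fun s => snd (u s)) 1 t - snd (u (-1))).
  { intros t. unfold Lsq, cDn. simpl. ring. }
  assert (P21 : forall t, fst (snd (Lsq (u,v)) t) = - fst (v t) - t * Derive_n (fun s => fst (v s)) 1 t + Derive_n (fun s => fst (u s)) 2 t).
  { intros t. unfold Lsq, cDn. simpl. ring. }
  assert (P22 : forall t, snd (snd (Lsq (u,v)) t) = - snd (v t) - t * Derive_n (fun s => snd (v s)) 1 t + Derive_n (fun s => snd (u s)) 2 t).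
  { intros t. unfold Lsq, cDn. simpl. ring. }
  assert (R11 : rsm (fun t => fst (fst (Lsq (u,v)) t))).
  { intros n x. eapply ex_derive_n_ext. intros t; symmetry; apply P11.
    apply rsm_minus; [apply rsm_minus; [auto | apply rsm_xD1; auto] | apply rsm_const]. }
  assert (R12 : rsm (fun t => snd (fst (Lsq (u,v)) t))).
  { intros n x. eapply ex_derive_n_ext. intros t; symmetry; apply P12.
    apply rsm_minus; [apply rsm_minus; [auto | apply rsm_xD1; auto] | apply rsm_const]. }
  assert (R21 : rsm (fun t => fst (snd (Lsq (u,v)) t))).
  { intros n x. eapply ex_derive_n_ext. intros t; symmetry; apply P21.
    apply rsm_plus; [apply rsm_minus; [apply rsm_opp; auto | apply rsm_xD1; auto] | apply rsm_Dn; auto]. }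
  assert (R22 : rsm (fun t => snd (snd (Lsq (u,v)) t))).
  { intros n x. eapply ex_derive_n_ext. intros t; symmetry; apply P22.
    apply rsm_plus; [apply rsm_minus; [apply rsm_opp; auto | apply rsm_xD1; auto] | apply rsm_Dn; auto]. }
  pose proof (side (@fst R R) (fun m F x => eq_refl) u v k Hu1 Hv1 P11 P21) as S1.
  pose proof (side (@snd R R) (fun m F x => eq_refl) u v k Hu2 Hv2 P12 P22) as S2.
  unfold normk2, ipk, ip0, Hdotip, Re, Cplus, Cmult, Cconj. cbn [fst snd].
  rewrite (Re_L2ip (cDn 1 (fst (Lsq (u,v)))) (cDn 1 u) (ex_c1 (fst (Lsq (u,v))) 1 R11) (ex_c2 (fst (Lsq (u,v))) 1 R12) (ex_c1 u 1 Hu1) (ex_c2 u 1 Hu2)).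
  rewrite (Re_L2ip (snd (Lsq (u,v))) (v) (ex_p _ R21) (ex_p _ R22) (ex_p _ Hv1) (ex_p _ Hv2)).
  rewrite (Re_L2ip (cDn (S k) (fst (Lsq (u,v)))) (cDn (S k) u) (ex_c1 (fst (Lsq (u,v))) (S k) R11) (ex_c2 (fst (Lsq (u,v))) (S k) R12) (ex_c1 u (S k) Hu1) (ex_c2 u (S k) Hu2)).
  rewrite (Re_L2ip (cDn k (snd (Lsq (u,v)))) (cDn k v) (ex_c1 (snd (Lsq (u,v))) k R21) (ex_c2 (snd (Lsq (u,v))) k R22) (ex_c1 v k Hv1) (ex_c2 v k Hv2)).
  rewrite (Re_L2ip (cDn 1 (u)) (cDn 1 u) (ex_c1 (u) 1 Hu1) (ex_c2 (u) 1 Hu2) (ex_c1 u 1 Hu1) (ex_c2 u 1 Hu2)).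
  rewrite (Re_L2ip (v) (v) (ex_p _ Hv1) (ex_p _ Hv2) (ex_p _ Hv1) (ex_p _ Hv2)).
  rewrite (Re_L2ip (cDn (S k) (u)) (cDn (S k) u) (ex_c1 (u) (S k) Hu1) (ex_c2 (u) (S k) Hu2) (ex_c1 u (S k) Hu1) (ex_c2 u (S k) Hu2)).
  rewrite (Re_L2ip (cDn k (v)) (cDn k v) (ex_c1 (v) k Hv1) (ex_c2 (v) k Hv2) (ex_c1 v k Hv1) (ex_c2 v k Hv2)).

  lra.
Qed.
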